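(* Let $f:\mathbb{R}^n\to\mathbb{R}^n$ be smooth, $N\ge3$, and for each $i$ let $A_{i+1,i},A_{i-1,i}$ be real $n\times n$ matrices (indices modulo $N$; $A_{j,i}$ is the coupling from node $j$ to node $i$). Consider the bidirectional ring network $$\dot{x}_i=f(x_i)+A_{i+1,i}(x_{i+1}-x_i)+A_{i-1,i}(x_{i-1}-x_i),\qquad i=1,\dots,N.$$ Suppose there is $\lambda>0$ with $(J_f(z))_s\preceq-\lambda I$ for all $z\in\mathbb{R}^n$, and that for each $i=1,\dots,N$ at least one of the following holds: (1) $(A_{i+1,i})_s\succ0$ and $(A_{i,i+1})_s-\tfrac14(A_{i,i+1}+A_{i+1,i}^T)\,(A_{i+1,i})_s^{-1}\,(A_{i+1,i}+A_{i,i+1}^T)\succeq0$; (2) $(A_{i,i+1})_s\succ0$ and $(A_{i+1,i})_s-\tfrac14(A_{i+1,i}+A_{i,i+1}^T)\,(A_{i,i+1})_s^{-1}\,(A_{i,i+1}+A_{i+1,i}^T)\succeq0$. Then for every initial condition, $\|x_i(t)-x_j(t)\|\to0$ exponentially as $t\to\infty$ for all $i,j$ (complete synchronization).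
   Context: $J_f(z)=\frac{\partial f}{\partial z}(z)$ is the Jacobian of $f$. For a square matrix $M$, $M_s=\tfrac12(M+M^T)$ and $M_s^{-1}$ denotes $(M_s)^{-1}$. For symmetric matrices, $\succ0$ ($\succeq0$) means positive definite (semidefinite), and $M\preceq N$ means $N-M\succeq0$. *)

(* Defs.v *)
From HB Require Import structures.
From mathcomp Require Import all_boot all_order all_algebra.
From mathcomp Require Import all_classical all_reals all_analysis.
Set Implicit Arguments. Unset Strict Implicit. Unset Printing Implicit Defensive.
Import Order.TTheory GRing.Theory Num.Theory.
Import numFieldNormedType.Exports.
Local Open Scope ring_scope.

Section Defs.
Variable R : realType.

Fixpoint iterD m p (vs : seq 'rV[R]_m) (f : 'rV[R]_m -> 'rV[R]_p) : 'rV[R]_m -> 'rV[R]_p :=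
  match vs with
  | [::] => f
  | v :: vs' => 'D_v (iterD vs' f)
  end.

Definition smooth m p (f : 'rV[R]_m -> 'rV[R]_p) : Prop :=
  forall vs : seq 'rV[R]_m,
    continuous (iterD vs f) /\ (forall (v x : 'rV[R]_m), derivable (iterD vs f) x v).

(* Jacobian in the usual (column) convention: (J_f z) i j = d f_i / d z_j.
   The library's [jacobian] acts on row vectors ('D_v f z = v *m jacobian f z),
   so it is the transpose. *)
Definition Jf n (f : 'rV[R]_n -> 'rV[R]_n) (z : 'rV[R]_n) : 'M[R]_n :=
  (jacobian f z)^T.

Definition symp n (M : 'M[R]_n) : 'M[R]_n := 2^-1 *: (M + M^T).

Definition qform n (M : 'M[R]_n) (v : 'rV[R]_n) : R := (v *m M *m v^T) 0 0.

Definition psd n (M : 'M[R]_n) : Prop := forall v : 'rV[R]_n, 0 <= qform M v.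
Definition pd n (M : 'M[R]_n) : Prop := forall v : 'rV[R]_n, v != 0 -> 0 < qform M v.

Definition loewner_le n (M N : 'M[R]_n) : Prop := psd (N - M).

End Defs.

(* Main.v *)
Require Import Defs.
From HB Require Import structures.
From mathcomp Require Import all_boot all_order all_algebra.
From mathcomp Require Import all_classical all_reals all_analysis.
From mathcomp Require Import ring lra.
Import Order.TTheory GRing.Theory Num.Theory.
Import numFieldNormedType.Exports.
Local Open Scope classical_set_scope.
Local Open Scope ring_scope.

(* Nodes are 'I_N (indices mod N: ordS i = i+1, ord_pred i = i-1);
   A j i is the coupling from node j to node i (only neighbours are used).
   x i t is the state of node i at time t (row vector); a term A x in the
   column convention is written x *m A^T. *)
Section A.
Variable R : realType.

Lemma mxnorm_le m p (M : 'M[R]_(m, p)) (b : R) :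
  0 <= b -> (forall i j, `|M i j| <= b) -> `|M| <= b.
Proof.
move=> b0 H; rewrite [X in X <= _]/Num.Def.normr /= mx_normrE.
by apply: bigmax_le => // -[i j] _; apply: H.
Qed.

Lemma mxnorm_ge m p (M : 'M[R]_(m, p)) i j : `|M i j| <= `|M|.
Proof.
rewrite [X in _ <= X]/Num.Def.normr /= mx_normrE.
exact: (le_bigmax _ _ (i, j)).
Qed.

Lemma line_deriv m p (g : 'rV[R]_m -> 'rV[R]_p) (y w : 'rV[R]_m) (s : R) :
  derivable g (y + s *: w) w ->
  is_derive s 1 (fun t : R => g (y + t *: w)) ('D_w g (y + s *: w)).
Proof.
move=> dg.
have E : (fun h : R => h^-1 *: (((fun t : R => g (y + t *: w)) \o shift s) (h *: 1) - g (y + s *: w)))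
  = (fun h : R => h^-1 *: ((g \o shift (y + s *: w)) (h *: w) - g (y + s *: w))).
  apply/funext => h /=; congr (_ *: (g _ - _)).
  by rewrite /shift /= [_%:A]mulr1 scalerDl addrCA.
split; first by rewrite /derivable E.
by rewrite /derive E.
Qed.

Lemma entry_deriv p (F : R -> 'rV[R]_p) (s : R) (dF : 'rV[R]_p) j :
  is_derive s (1:R) F dF -> is_derive s (1:R) (fun t => F t 0 j) (dF 0 j).
Proof.
case=> dd <-; split; first exact: ((derivable_mxP _ _ _).1 dd 0 j).
by rewrite (derive_mx dd) mxE.
Qed.

Lemma mvt0 (G dG : R -> R) (a : R) :
  (forall t : R, is_derive t (1:R) G (dG t)) ->
  exists2 c, `|c| <= `|a| & G a - G 0 = dG c * a.
Proof.
move=> dG0.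
have cont : forall (i : interval R), {within [set` i], continuous G}.
  by move=> i; apply: derivable_within_continuous => x _; case: (dG0 x).
case: (leP 0 a) => a0.
  have [c c0a E] := MVT_segment a0 (fun x _ => dG0 x) (cont _).
  exists c; last by rewrite E subr0.
  move: c0a; rewrite in_itv /= => /andP[c0 ca].
  by rewrite !ger0_norm // (le_trans c0 ca).
have [c c0a E] := MVT_segment (ltW a0) (fun x _ => dG0 x) (cont _).
exists c.
  move: c0a; rewrite in_itv /= => /andP[ac c0].
  by rewrite !ler0_norm ?lerN2 // ltW.
by rewrite -opprB E sub0r mulrN opprK.
Qed.

Lemma mulmx_norm_le m p (J : 'M[R]_(m, p)) (h : 'rV[R]_m) :
  `|h *m J| <= (\sum_k `|row k J|) * `|h|.
Proof.
rewrite mulmx_sum_row mulr_suml (le_trans (ler_norm_sum _ _ _))//.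
apply: ler_sum => k _; rewrite normrZ mulrC ler_wpM2l //.
exact: mxnorm_ge.
Qed.

Lemma mulmx_cont m p (J : 'M[R]_(m, p)) : continuous (fun h : 'rV[R]_m => h *m J).
Proof.
move=> x A /nbhs_ballP [eps /= eps0 epsA].
set C := \sum_k `|row k J|.
have C0 : 0 <= C by apply: sumr_ge0 => k _.
have r0 : 0 < eps / (C + 1) by rewrite divr_gt0 // ltr_wpDl.
apply/nbhs_ballP; exists (eps / (C + 1)) => // y; rewrite -ball_normE /= => xy.
apply: epsA; rewrite -ball_normE /=.
rewrite -mulmxBl (le_lt_trans (mulmx_norm_le _ _ J (x - y))) //.
rewrite -(@ltr_pM2r _ (C + 1)) ?ltr_wpDl // in xy.
rewrite divfK ?gt_eqF ?ltr_wpDl // in xy.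
apply: le_lt_trans xy; rewrite mulrC ler_wpM2l //; last by rewrite lerDl.
Qed.

Lemma smooth_diff m p (g : 'rV[R]_m -> 'rV[R]_p) :
  (forall x v, derivable g x v) -> (forall v, continuous ('D_v g)) ->
  forall z, differentiable g z.
Proof.
move=> dg cg z.
pose e (k : 'I_m) : 'rV[R]_m := delta_mx 0 k.
pose J : 'M[R]_(m, p) := \matrix_(k < m) 'D_(e k) g z.
pose df : {linear 'rV[R]_m -> 'rV[R]_p} := mulmxr J.
have dfc : continuous df by exact: mulmx_cont.
have Ho : g \o shift z = cst (g z) + df +o_ 0 id.
  apply/eqaddoP => eps eps0.
  pose eps' := eps / (m%:R + 1).
  have eps'0 : 0 < eps' by rewrite divr_gt0 // ltr_wpDl.
  have H : \forall y \near z, forall k : 'I_m, `|'D_(e k) g z - 'D_(e k) g y| <= eps'.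
    eapply filter_forall; last first.
      move=> k; exact: ((cvgrPdist_le _ _).1 (cg (e k) z) eps' eps'0).
    first [exact: mx_nbhs_filter | exact: nbhs_filter | exact: (@nbhs_filter _ z) | (apply: proper_filter; exact: mx_nbhs_filter) ].
  have [d /= d0 Hd] := (nbhs_ballP _ _).1 H.
  apply/nbhs_ballP; exists d => // h; rewrite -ball_normE /= sub0r normrN => hd.
  rewrite /=.
  pose P (k : nat) : 'rV[R]_m := z + \row_(j < m) (if (j < k)%N then h 0 j else 0).
  have P0 : P 0%N = z.
    by rewrite /P (_ : \row_(j < m) _ = 0) ?addr0 //; apply/rowP => j; rewrite !mxE.
  have Pm : P m = h + z.
    by rewrite /P addrC; congr (_ + _); apply/rowP => j; rewrite !mxE ltn_ord.
  have PS : forall k : 'I_m, P k.+1 = P k + h 0 k *: e k.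
    move=> k; rewrite /P -addrA; congr (_ + _); apply/rowP => j; rewrite !mxE ltnS leq_eqVlt.
    have [->|jk] := eqVneq j k; first by rewrite eqxx ltnn /= mulr1 add0r.
    by rewrite val_eqE (negbTE jk) /= mulr0 addr0.
  have -> : (g \o shift z - (cst (g z) + mulmxr J)) h = g (h + z) - (g z + h *m J) by [].
  have tel : g (P m) - g (P 0%N) = \sum_(k < m) (g (P k.+1) - g (P k)).
    by rewrite -(telescope_sumr (fun k => g (P k)) (leq0n m)) big_mkord.
  have hJ : h *m J = \sum_(k < m) h 0 k *: 'D_(e k) g z.
    by rewrite mulmx_sum_row; apply: eq_bigr => k _; rewrite rowK.
  rewrite -Pm opprD addrA -P0 tel hJ -sumrB.
  apply: le_trans (ler_norm_sum _ _ _) _.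
  apply: (@le_trans _ _ (\sum_(k < m) `|h| * eps')).
    apply: ler_sum => k _.
    apply: mxnorm_le; first by rewrite mulr_ge0 // ltW.
    move=> i j; rewrite [i]ord1.
    have dG : forall t : R, is_derive t (1:R) (fun t => g (P k + t *: e k) 0 j)
                ('D_(e k) g (P k + t *: e k) 0 j) := fun t => entry_deriv _ _ _ _ j (line_deriv _ _ g (P k) (e k) t (dg _ _)).
    have [c cle E] := mvt0 _ _ (h 0 k) dG.
    rewrite scale0r addr0 in E.
    rewrite !mxE PS E mulrC -mulrBr normrM.
    apply: ler_pM; [exact: normr_ge0 | exact: normr_ge0 | exact: mxnorm_ge | ].
    have Hb : ball z d (P k + c *: e k).
      rewrite -ball_normE /=; apply: le_lt_trans hd; rewrite distrC.
      rewrite /P -(addrA z) addrC addrK.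
      apply: mxnorm_le => // i' j'; rewrite !mxE [i']ord1.
      case: ifP => jk.
        have jk' : (j' == k) = false by apply/negbTE; apply/eqP => E'; rewrite E' ltnn in jk.
        by rewrite jk' mulr0 addr0 mxnorm_ge.
      rewrite add0r; case: (j' == k); rewrite /= ?mulr1 ?mulr0 ?normr0 //.
      exact: (le_trans cle (mxnorm_ge _ _ _ _ _)).
    apply: le_trans (Hd _ Hb k); rewrite distrC.
    by have := mxnorm_ge _ _ ('D_(e k) g z - 'D_(e k) g (P k + c *: e k)) 0 j; rewrite !mxE.
  rewrite sumr_const card_ord -mulrnAr mulrC ler_wpM2r //.
  rewrite /eps' -mulr_natr mulrAC ler_pdivrMr ?ltr_wpDl // ler_wpM2l ?lerDl //.
  exact: ltW.
have Hd := diff_unique dfc Ho.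
apply/diff_locallyP; rewrite Hd; split => //.
Qed.

Definition dot {m} (u v : 'rV[R]_m) : R := \sum_j u 0 j * v 0 j.

Lemma is_derive_dot p (F : R -> 'rV[R]_p) (d : 'rV[R]_p) (t : R) (dF : 'rV[R]_p) :
  is_derive t (1:R) F dF -> is_derive t (1:R) (fun s => dot d (F s)) (dot d dF).
Proof.
move=> H.
have H2 : is_derive t (1:R) (\sum_(j < p) (fun s => d 0 j * F s 0 j)) (\sum_(j < p) d 0 j * dF 0 j).
  apply: is_derive_sum => j.
  have := is_deriveZ (d 0 j) (entry_deriv _ _ _ _ j H).
  by [].
have E : (\sum_(j < p) (fun s => d 0 j * F s 0 j)) = (fun s => dot d (F s)).
  by apply/funext => s; rewrite /dot fct_sumE.
by rewrite -E.
Qed.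

Lemma dotC m (u v : 'rV[R]_m) : dot u v = dot v u.
Proof. by apply: eq_bigr => j _; rewrite mulrC. Qed.

Lemma qform_dot m (M : 'M[R]_m) v : qform M v = dot (v *m M) v.
Proof. by rewrite /qform /dot [LHS]mxE; apply: eq_bigr => j _; rewrite [v^T _ _]mxE. Qed.

Lemma qform_tr m (M : 'M[R]_m) v : qform M^T v = qform M v.
Proof.
rewrite /qform; have -> : (v *m M^T *m v^T) 0 0 = (v *m M^T *m v^T)^T 0 0 by rewrite [RHS]mxE.
by rewrite !trmx_mul !trmxK mulmxA.
Qed.

Lemma qformD m (M N : 'M[R]_m) v : qform (M + N) v = qform M v + qform N v.
Proof. by rewrite /qform mulmxDr mulmxDl mxE. Qed.

Lemma qformN m (M : 'M[R]_m) v : qform (- M) v = - qform M v.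
Proof. by rewrite /qform mulmxN mulNmx mxE. Qed.

Lemma qformZ m (a : R) (M : 'M[R]_m) v : qform (a *: M) v = a * qform M v.
Proof. by rewrite /qform -scalemxAr -scalemxAl mxE. Qed.

Lemma qform1 m (v : 'rV[R]_m) : qform 1%:M v = dot v v.
Proof. by rewrite qform_dot mulmx1. Qed.

Lemma qform_symp m (M : 'M[R]_m) v : qform (symp M) v = qform M v.
Proof.
by rewrite /symp qformZ qformD qform_tr mulrDr !(mulrC 2^-1) -splitr.
Qed.

Lemma dotBr m (d a b : 'rV[R]_m) : dot d (a - b) = dot d a - dot d b.
Proof. by rewrite /dot -sumrB; apply: eq_bigr => j _; rewrite !mxE mulrBr. Qed.

Lemma contraction n (f : 'rV[R]_n -> 'rV[R]_n) (lam : R) :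
  (forall x v, derivable f x v) -> (forall v, continuous ('D_v f)) ->
  (forall z, loewner_le (symp (Jf f z)) (- lam *: 1%:M)) ->
  forall u v, dot (u - v) (f u - f v) <= - lam * dot (u - v) (u - v).
Proof.
move=> dg cg Hl u v; set d := u - v.
have key : forall y, dot d ('D_d f y) <= - lam * dot d d.
  move=> y; have := Hl y d.
  rewrite qformD qformN qform_symp qformZ qform1 subr_ge0 /Jf qform_tr qform_dot.
  by rewrite -(deriveEjacobian _ (smooth_diff _ _ _ dg cg y)) dotC.
pose G t := dot d (f (v + t *: d)).
have dG : forall t : R, is_derive t (1:R) G (dot d ('D_d f (v + t *: d))) :=
  fun t => is_derive_dot _ _ d t _ (line_deriv _ _ f v d t (dg _ _)).
have [c _ E] := mvt0 G _ 1 dG.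
have Hu : v + 1 *: d = u by rewrite scale1r /d addrC subrK.
rewrite /G Hu scale0r addr0 mulr1 -dotBr in E.
by rewrite E key.
Qed.

Definition bil {m} (M : 'M[R]_m) (a b : 'rV[R]_m) : R := (a *m M *m b^T) 0 0.

Lemma qform_bil m (M : 'M[R]_m) a : qform M a = bil M a a.
Proof. by []. Qed.

Lemma bilDl m (M : 'M[R]_m) a1 a2 b : bil M (a1 + a2) b = bil M a1 b + bil M a2 b.
Proof. by rewrite /bil !mulmxDl mxE. Qed.

Lemma bilDr m (M : 'M[R]_m) a b1 b2 : bil M a (b1 + b2) = bil M a b1 + bil M a b2.
Proof. by rewrite /bil linearD /= mulmxDr mxE. Qed.

Lemma bilZl m (M : 'M[R]_m) c a b : bil M (c *: a) b = c * bil M a b.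
Proof. by rewrite /bil -!scalemxAl mxE. Qed.

Lemma bilZr m (M : 'M[R]_m) c a b : bil M a (c *: b) = c * bil M a b.
Proof. by rewrite /bil linearZ /= -scalemxAr mxE. Qed.

Lemma bil_tr m (M : 'M[R]_m) a b : bil M^T a b = bil M b a.
Proof.
rewrite /bil; have -> : (a *m M^T *m b^T) 0 0 = (a *m M^T *m b^T)^T 0 0 by rewrite [RHS]mxE.
by rewrite !trmx_mul !trmxK mulmxA.
Qed.

Lemma bil_mulr m (M N : 'M[R]_m) a b : bil M a (b *m N) = bil (M *m N^T) a b.
Proof. by rewrite /bil trmx_mul !mulmxA. Qed.

Lemma bil_mull m (M N : 'M[R]_m) a b : bil M (a *m N) b = bil (N *m M) a b.
Proof. by rewrite /bil !mulmxA. Qed.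

Lemma bilD m (M N : 'M[R]_m) a b : bil (M + N) a b = bil M a b + bil N a b.
Proof. by rewrite /bil mulmxDr mulmxDl mxE. Qed.

Lemma pd_unit m (P : 'M[R]_m) : pd P -> P \in unitmx.
Proof.
move=> H; rewrite unitmxE unitfE; apply/negP => /det0P [v v0 vP].
by have := H v v0; rewrite /qform vP mul0mx mxE ltxx.
Qed.

Lemma symp_tr m (X : 'M[R]_m) : (symp X)^T = symp X.
Proof. by rewrite /symp linearZ /= linearD /= trmxK addrC. Qed.

Lemma schur m (X Y : 'M[R]_m) u w :
  pd (symp X) ->
  psd (symp Y - 4^-1 *: (Y + X^T) *m invmx (symp X) *m (X + Y^T)) ->
  0 <= qform X u + qform Y w + bil (X + Y^T) u w.
Proof.
move=> hP hS.
set P := symp X; set C := X + Y^T; set K := invmx P.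
have Pu : P \in unitmx by exact: pd_unit.
have PT : P^T = P by exact: symp_tr.
have KT : K^T = K by rewrite /K trmx_inv PT.
have CT : Y + X^T = C^T by rewrite /C linearD /= trmxK addrC.
rewrite CT -/K in hS.
pose t := w *m (C^T *m K).
have H1 : bil P u t = bil C u w.
  by rewrite /t bil_mulr trmx_mul KT trmxK mulmxA mulmxV // mul1mx.
have H2 : bil P t u = bil C u w by rewrite -H1 -bil_tr PT.
have H3 : bil P t t = qform (C^T *m K *m C) w.
  rewrite /t bil_mull bil_mulr trmx_mul KT trmxK qform_bil.
  by rewrite -!mulmxA (mulmxA K P) mulVmx // mul1mx.
have Hz : 0 <= qform P (u + 2^-1 *: t).
  have [->|nz] := eqVneq (u + 2^-1 *: t) 0; first by rewrite /qform !mul0mx mxE.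
  exact: ltW (hP _ nz).
have := hS w.
rewrite qformD qformN qform_symp -scalemxAl -scalemxAl qformZ.
move: Hz; rewrite qform_bil bilDl !bilDr !bilZl !bilZr H1 H2 H3 -qform_bil.
rewrite /P qform_symp => Hz HS.
rewrite -/C in HS.
have := addr_ge0 Hz HS.
set a := qform X u; set b := bil C u w; set q := qform _ w; set y := qform Y w.
move=> H.
lra.
Qed.

Lemma bilNl m (M : 'M[R]_m) a b : bil M (- a) b = - bil M a b.
Proof. by rewrite -scaleN1r bilZl mulN1r. Qed.

Lemma bilNr m (M : 'M[R]_m) a b : bil M a (- b) = - bil M a b.
Proof. by rewrite -scaleN1r bilZr mulN1r. Qed.

Lemma dot_mulT m (a b : 'rV[R]_m) (M : 'M[R]_m) : dot a (b *m M^T) = bil M a b.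
Proof.
rewrite /bil -mulmxA -[M](trmxK M) -trmx_mul trmxK.
by rewrite /dot [RHS]mxE; apply: eq_bigr => j _; rewrite [_^T _ _]mxE.
Qed.

Lemma coupling_le n N (A : 'I_N -> 'I_N -> 'M[R]_n) :
  (forall i : 'I_N,
     (pd (symp (A (ordS i) i)) /\
      psd (symp (A i (ordS i)) -
           4^-1 *: (A i (ordS i) + (A (ordS i) i)^T) *m invmx (symp (A (ordS i) i))
                   *m (A (ordS i) i + (A i (ordS i))^T)))
     \/
     (pd (symp (A i (ordS i))) /\
      psd (symp (A (ordS i) i) -
           4^-1 *: (A (ordS i) i + (A i (ordS i))^T) *m invmx (symp (A i (ordS i)))
                   *m (A i (ordS i) + (A (ordS i) i)^T)))) ->
  forall E : 'I_N -> 'rV[R]_n,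
  \sum_i (bil (A (ordS i) i) (E i) (E (ordS i) - E i)
          + bil (A (ord_pred i) i) (E i) (E (ord_pred i) - E i)) <= 0.
Proof.
move=> Hc E; rewrite big_split /=.
rewrite [X in _ + X](reindex_inj (can_inj (@ordSK N))) /=.
under [X in _ + X]eq_bigr do rewrite ordSK.
rewrite -big_split /=; apply: sumr_le0 => i _.
set u := E i; set w := E (ordS i).
rewrite !bilDr !bilNr.
case: (Hc i) => [[h1 h2]|[h1 h2]].
  have := schur _ (A (ordS i)  i) (A i (ordS i)) u (- w) h1 h2.
  rewrite !qform_bil bilD bil_tr !bilNl !bilNr opprK.
  lra.
have := schur _ (A i (ordS i)) (A (ordS i)  i) (- w) u h1 h2.
rewrite !qform_bil bilD bil_tr !bilNl !bilNr opprK.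
lra.
Qed.

Lemma is_derive_dotself p (F : R -> 'rV[R]_p) (t : R) (dF : 'rV[R]_p) :
  is_derive t (1:R) F dF -> is_derive t (1:R) (fun s => dot (F s) (F s)) (2 * dot (F t) dF).
Proof.
move=> H.
have H2 : is_derive t (1:R) (\sum_(j < p) ((fun s => F s 0 j) * (fun s => F s 0 j)))
   (\sum_(j < p) (F t 0 j *: dF 0 j + F t 0 j *: dF 0 j)).
  apply: is_derive_sum => j.
  have Hj := entry_deriv _ _ _ _ j H.
  exact: (is_deriveM Hj Hj).
have E : (\sum_(j < p) ((fun s => F s 0 j) * (fun s => F s 0 j))) = (fun s => dot (F s) (F s)).
  by apply/funext => s; rewrite /dot fct_sumE.
have E2 : \sum_(j < p) (F t 0 j *: dF 0 j + F t 0 j *: dF 0 j) = 2 * dot (F t) dF.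
  rewrite /dot mulr_sumr; apply: eq_bigr => j _.
  by rewrite -mulr2n [RHS]mulrC mulr_natr.
by rewrite -E -E2.
Qed.

Lemma cont_sum (T : topologicalType) k (F : 'I_k -> T -> R) (t : T) :
  (forall i, {for t, continuous (F i)}) -> {for t, continuous (fun s => \sum_i F i s)}.
Proof.
move=> H.
have -> : (fun s => \sum_i F i s) = \sum_i F i by apply/funext => s; rewrite fct_sumE.
elim/big_ind: _ => //; first exact: cst_continuous.
by move=> f g cf cg; apply: continuousD.
Qed.
Lemma test_ (x : R -> 'rV[R]_3) j : {within `[0, +oo[, continuous x} ->
  {within `[0, +oo[, continuous (fun s => x s 0 j)}.
Proof.
move=> xc t.
have := @continuous_comp _ _ _ (from_subspace `[0, +oo[%classic x) (fun M : 'rV[R]_3 => M 0 j) t (xc t).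
apply; exact: coord_continuous.
Qed.

Lemma dotDr m (d a b : 'rV[R]_m) : dot d (a + b) = dot d a + dot d b.
Proof. by rewrite /dot -big_split; apply: eq_bigr => j _; rewrite !mxE mulrDr. Qed.

Lemma dot_suml m k (a : 'I_k -> 'rV[R]_m) b : \sum_i dot (a i) b = dot (\sum_i a i) b.
Proof.
rewrite /dot exchange_big /=; apply: eq_bigr => j _.
by rewrite summxE mulr_suml.
Qed.

Lemma dot0l m (b : 'rV[R]_m) : dot 0 b = 0.
Proof. by rewrite /dot big1 // => j _; rewrite mxE mul0r. Qed.

Lemma dot_ge0 m (a : 'rV[R]_m) : 0 <= dot a a.
Proof. by apply: sumr_ge0 => j _; rewrite -expr2 sqr_ge0. Qed.

Lemma norm_le_dot m (a : 'rV[R]_m) : `|a| <= Num.sqrt (dot a a).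
Proof.
apply: mxnorm_le => // i j; rewrite [i]ord1.
rewrite -sqrtr_sqr ler_wsqrtr // /dot (bigD1 j) //= expr2 lerDl.
by apply: sumr_ge0 => k _; rewrite -expr2 sqr_ge0.
Qed.

Lemma core (n N : nat) (f : 'rV[R]_n -> 'rV[R]_n)
  (A : 'I_N -> 'I_N -> 'M[R]_n) :
  (3 <= N)%N ->
  smooth f ->
  (exists lambda : R, 0 < lambda /\
     forall z, loewner_le (symp (Jf f z)) (- lambda *: 1%:M)) ->
  (forall i : 'I_N,
     (pd (symp (A (ordS i) i)) /\
      psd (symp (A i (ordS i)) -
           4^-1 *: (A i (ordS i) + (A (ordS i) i)^T) *m invmx (symp (A (ordS i) i))
                   *m (A (ordS i) i + (A i (ordS i))^T)))
     \/
     (pd (symp (A i (ordS i))) /\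
      psd (symp (A (ordS i) i) -
           4^-1 *: (A (ordS i) i + (A i (ordS i))^T) *m invmx (symp (A i (ordS i)))
                   *m (A i (ordS i) + (A (ordS i) i)^T)))) ->
  forall x : 'I_N -> R -> 'rV[R]_n,
    (forall i, {within `[0, +oo[, continuous (x i)}) ->
    (forall i (t : R), 0 < t ->
       is_derive t 1 (x i)
         (f (x i t) + (x (ordS i) t - x i t) *m (A (ordS i) i)^T
                    + (x (ord_pred i) t - x i t) *m (A (ord_pred i) i)^T)) ->
    exists (c k : R), 0 < k /\
      forall (t : R), 0 <= t -> forall i j : 'I_N,
        `|x i t - x j t| <= c * expR (- k * t).
Proof.
move=> N3 sm [lam [lam0 Hl]] Hc x xc xd.
have dg : forall y v, derivable f y v := fun y v => (sm [::]).2 v y.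
have cg : forall v, continuous ('D_v f) := fun v => (sm [:: v]).1.
have contr := contraction _ _ _ dg cg Hl.
have N0 : (0 < N)%N by apply: leq_trans N3.
have NR : (N%:R : R) != 0 by rewrite pnatr_eq0 -lt0n.
pose m t := (N%:R)^-1 *: \sum_i x i t.
pose e i t := x i t - m t.
pose V t := \sum_i dot (e i t) (e i t).
pose Fv i t := f (x i t) + (x (ordS i) t - x i t) *m (A (ordS i) i)^T
                    + (x (ord_pred i) t - x i t) *m (A (ord_pred i) i)^T.
pose mF t := (N%:R)^-1 *: \sum_i Fv i t.
have sume : forall t : R, \sum_i e i t = 0.
  move=> t; rewrite /e sumrB /m sumr_const card_ord -scaler_nat scalerA divff //.
  by rewrite scale1r subrr.
have dm : forall t : R, 0 < t -> is_derive t (1:R) m (mF t).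
  move=> t t0.
  have H : is_derive t (1:R) (\sum_(i < N) x i) (\sum_i Fv i t).
    by apply: is_derive_sum => i; exact: xd.
  have H2 := is_deriveZ (N%:R^-1) H.
  have E : (N%:R)^-1 \*: \sum_(i < N) x i = m by apply/funext => s; rewrite /m /= fct_sumE.
  by rewrite -E.
have de : forall i (t : R), 0 < t -> is_derive t (1:R) (e i) (Fv i t - mF t).
  move=> i t t0; exact: (is_deriveB (xd i t t0) (dm t t0)).
have dV : forall t : R, 0 < t -> is_derive t (1:R) V (\sum_i 2 * dot (e i t) (Fv i t - mF t)).
  move=> t t0.
  have H : is_derive t (1:R) (\sum_(i < N) (fun s => dot (e i s) (e i s))) (\sum_i 2 * dot (e i t) (Fv i t - mF t)).
    by apply: is_derive_sum => i; exact: (is_derive_dotself _ _ _ _ (de i t t0)).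
  have E : \sum_(i < N) (fun s => dot (e i s) (e i s)) = V by apply/funext => s; rewrite /V fct_sumE.
  by rewrite -E.
have key : forall t : R, 0 < t -> \sum_i 2 * dot (e i t) (Fv i t - mF t) <= - (2 * lam) * V t.
  move=> t _.
  have diffx : forall i j, x j t - x i t = e j t - e i t.
    by move=> i j; rewrite /e opprB addrA subrK.
  have T : forall i, dot (e i t) (Fv i t - mF t) =
      dot (e i t) (f (x i t) - f (m t))
      + (bil (A (ordS i) i) (e i t) (e (ordS i) t - e i t)
         + bil (A (ord_pred i) i) (e i t) (e (ord_pred i) t - e i t))
      + (dot (e i t) (f (m t)) - dot (e i t) (mF t)).
    move=> i; rewrite /Fv !dotBr !dotDr !dot_mulT !diffx.
    lra.
  rewrite -mulr_sumr (eq_bigr _ (fun i _ => T i)) big_split /= big_split /=.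
  have S3 : \sum_i (dot (e i t) (f (m t)) - dot (e i t) (mF t)) = 0.
    by rewrite sumrB !dot_suml sume !dot0l subrr.
  have S1 : \sum_i dot (e i t) (f (x i t) - f (m t)) <= - lam * V t.
    rewrite /V mulr_sumr; apply: ler_sum => i _.
    exact: (contr (x i t) (m t)).
  have S2 : \sum_i (bil (A (ordS i) i) (e i t) (e (ordS i) t - e i t)
         + bil (A (ord_pred i) i) (e i t) (e (ord_pred i) t - e i t)) <= 0
    := coupling_le _ _ A Hc (fun i => e i t).
  rewrite S3; lra.
have ent : forall i j (t : R), {for t, continuous (from_subspace `[0, +oo[%classic (fun s => x i s 0 j))}.
  move=> i j t.
  have := @continuous_comp _ _ _ (from_subspace `[0, +oo[%classic (x i)) (fun M : 'rV[R]_n => M 0 j) t (xc i t).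
  apply; exact: coord_continuous.
have ce : forall i j (t : R), {for t, continuous (from_subspace `[0, +oo[%classic (fun s => e i s 0 j))}.
  move=> i j t.
  have -> : (fun s => e i s 0 j) = (fun s => x i s 0 j - N%:R^-1 * \sum_k x k s 0 j).
    by apply/funext => s; rewrite /e /m !mxE summxE.
  apply: cvgB; first exact: ent.
  apply: cvgM; first exact: cvg_cst.
  by apply: (@cont_sum (subspace (`[0, +oo[%classic : set R)) N (fun k s => x k s 0 j) t) => k; exact: ent.
have cV : forall t : R, {for t, continuous (from_subspace `[0, +oo[%classic V)}.
  move=> t; apply: (@cont_sum (subspace (`[0, +oo[%classic : set R)) N (fun i s => dot (e i s) (e i s)) t) => i.
  apply: (@cont_sum (subspace (`[0, +oo[%classic : set R)) n (fun j s => e i s 0 j * e i s 0 j) t) => j.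
  by apply: cvgM; exact: ce.
pose g t := expR (2 * lam * t).
have dgx : forall t : R, is_derive t (1:R) g (expR (2 * lam * t) * (2 * lam)).
  move=> t.
  have H1 : is_derive t (1:R) (fun s : R => 2 * lam * s) (2 * lam).
    have := @is_deriveZ _ _ _ id (2 * lam) t 1 1 (is_derive_id _ _).
    by rewrite [_%:A]mulr1.
  exact: (is_derive1_comp (is_derive_expR (2 * lam * t)) H1).
pose W t := V t * g t.
have dW : forall t : R, 0 < t -> is_derive t (1:R) W
    (V t *: (expR (2 * lam * t) * (2 * lam)) + g t *: (\sum_i 2 * dot (e i t) (Fv i t - mF t))).
  by move=> t t0; exact: (is_deriveM (dV t t0) (dgx t)).
have Wd : forall t : R, t \in `]0, +oo[ -> derivable W t 1.
  by move=> t; rewrite in_itv /= andbT => t0; case: (dW t t0).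
have Wd1 : forall t : R, t \in `]0, +oo[ -> (W^`())%classic t <= 0.
  move=> t; rewrite in_itv /= andbT => t0.
  rewrite derive1E; case: (dW t t0) => _ ->.
  have k1 := key t t0.
  have g0 : 0 < g t by exact: expR_gt0.
  rewrite /g in g0 *.
  set S := \sum_i _ in k1 *.
  set E := expR _ in g0 *.
  rewrite /GRing.scale /=.
  nra.
have Wc : {within `[0, +oo[, continuous W}.
  move=> t; apply: cvgM; first exact: cV.
  have := @derivable_within_continuous _ _ g `[0, +oo[ (fun s _ => match dgx s with DeriveDef h _ => h end).
  by apply.
have mono := ler0_derive1_nincry Wd Wd1 Wc.
have Vb : forall t : R, 0 <= t -> V t <= V 0 * expR (- (2 * lam) * t).
  move=> t t0.
  have := mono 0 t (lexx 0) t0; rewrite /W /g mulr0 expR0 mulr1 => H.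
  have -> : V t = V t * expR (2 * lam * t) * expR (- (2 * lam) * t).
    by rewrite -mulrA -expRD mulNr addrN expR0 mulr1.
  by rewrite ler_wpM2r // ltW // expR_gt0.
have V0 : 0 <= V 0 by apply: sumr_ge0 => i _; exact: dot_ge0.
exists (2 * Num.sqrt (V 0)), lam; split => // t t0 i j.
have ei : forall k, `|e k t| <= Num.sqrt (V 0) * expR (- lam * t).
  move=> k; apply: le_trans (norm_le_dot _ _) _.
  have E2 : expR (- (2 * lam) * t) = expR (- lam * t) ^+ 2.
    by rewrite expr2 -expRD; congr expR; lra.
  have H1 : dot (e k t) (e k t) <= V 0 * expR (- (2 * lam) * t).
    apply: le_trans (Vb t t0); rewrite /V (bigD1 k) //= lerDl.
    by apply: sumr_ge0 => l _; exact: dot_ge0.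
  apply: le_trans (ler_wsqrtr H1) _.
  by rewrite E2 sqrtrM // sqrtr_sqr ger0_norm // ltW // expR_gt0.
have -> : x i t - x j t = e i t - e j t by rewrite /e opprB addrA subrK.
apply: le_trans (ler_normB _ _) _.
have := ei i; have := ei j; lra.
Qed.
End A.

Theorem theorem3p10 (R : realType) (n N : nat) (f : 'rV[R]_n -> 'rV[R]_n)
  (A : 'I_N -> 'I_N -> 'M[R]_n) :
  (3 <= N)%N ->
  smooth f ->
  (exists lambda : R, 0 < lambda /\
     forall z, loewner_le (symp (Jf f z)) (- lambda *: 1%:M)) ->
  (forall i : 'I_N,
     (pd (symp (A (ordS i) i)) /\
      psd (symp (A i (ordS i)) -
           4^-1 *: (A i (ordS i) + (A (ordS i) i)^T) *m invmx (symp (A (ordS i) i))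
                   *m (A (ordS i) i + (A i (ordS i))^T)))
     \/
     (pd (symp (A i (ordS i))) /\
      psd (symp (A (ordS i) i) -
           4^-1 *: (A (ordS i) i + (A i (ordS i))^T) *m invmx (symp (A i (ordS i)))
                   *m (A i (ordS i) + (A (ordS i) i)^T)))) ->
  forall x : 'I_N -> R -> 'rV[R]_n,
    (forall i, {within `[0, +oo[, continuous (x i)}) ->
    (forall i (t : R), 0 < t ->
       is_derive t 1 (x i)
         (f (x i t) + (x (ordS i) t - x i t) *m (A (ordS i) i)^T
                    + (x (ord_pred i) t - x i t) *m (A (ord_pred i) i)^T)) ->
    exists (c k : R), 0 < k /\
      forall (t : R), 0 <= t -> forall i j : 'I_N,
        `|x i t - x j t| <= c * expR (- k * t).
Proof.
Proof. exact: core. Qed.
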